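(* Let $\varphi\colon\partial\mathbb{D}\to\partial\mathbb{D}$ be a bi-Lipschitz homeomorphism fixing $1,i,-1,-i$, written $\varphi(e^{i\theta})=e^{i\varphi(\theta)}$, where $\theta\mapsto\varphi(\theta)$ is the increasing continuous lift with $\varphi(0)=0$. For $t\in[0,1]$ let $\varphi_t(\theta)=(1-t)\theta+t\varphi(\theta)$ and define $\overline{\varphi}\colon\overline{\mathbb{D}}\times[0,1]\to\overline{\mathbb{D}}\times[0,1]$ by $\overline{\varphi}(re^{i\theta},t)=(re^{i\varphi_t(\theta)},t)$. Then $\overline{\varphi}$ is bi-Lipschitz.
   Context: $\mathbb{D}=\{z\in\mathbb{C}:|z|<1\}$ is the unit disk. *)

(* Defs.v *)
(* concrete reals R. The plane C is modelled as R*R. *)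
From Stdlib Require Import Reals.
Open Scope R_scope.

Definition dist2 (p q : R * R) : R :=
  sqrt ((fst p - fst q) ^ 2 + (snd p - snd q) ^ 2).

Definition dist3 (p q : (R * R) * R) : R :=
  sqrt ((fst (fst p) - fst (fst q)) ^ 2 + (snd (fst p) - snd (fst q)) ^ 2
        + (snd p - snd q) ^ 2).

Definition on_circle (p : R * R) : Prop := fst p ^ 2 + snd p ^ 2 = 1.

Definition expi (th : R) : R * R := (cos th, sin th).

Definition phi_t (lift : R -> R) (t th : R) : R := (1 - t) * th + t * lift th.

Definition polar_pt (r th t : R) : (R * R) * R := ((r * cos th, r * sin th), t).

Definition phibar_pt (lift : R -> R) (r th t : R) : (R * R) * R :=
  polar_pt r (phi_t lift t th) t.

(* Main.v *)
Require Import Defs.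
From Stdlib Require Import Reals Lra Lia Psatz ZArith.
Open Scope R_scope.

Lemma Q_half w : 1 - cos w = 2 * sin (w/2) ^ 2.
Proof. replace w with (2*(w/2)) at 1 by field. rewrite cos_2a_sin. ring. Qed.

Lemma sin_sq_le u : sin u ^2 <= u^2.
Proof.
  assert (G: forall v, 0 < v -> sin v ^ 2 <= v ^2).
  { intros v Hv. assert (H1 := sin_lt_x v Hv). assert (HS := SIN_bound v).
    assert (HP := PI2_3_2).
    destruct (Rle_or_lt 1 v).
    - nra.
    - assert (0 <= sin v) by (apply sin_ge_0; lra). nra. }
  destruct (Rtotal_order u 0) as [H|[H|H]].
  - replace (sin u ^2) with (sin (-u) ^2) by (rewrite sin_neg; ring).
    replace (u^2) with ((-u)^2) by ring. apply G; lra.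
  - subst. rewrite sin_0. lra.
  - apply G; lra.
Qed.

Lemma Q_upper w : 1 - cos w <= w^2/2.
Proof. rewrite Q_half. assert (H := sin_sq_le (w/2)). lra. Qed.

Lemma Q_nonneg w : 0 <= 1 - cos w.
Proof. destruct (COS_bound w). lra. Qed.

Lemma sin_lb_poly u : 0 <= u -> u <= 2 -> u/3 <= sin u.
Proof.
  intros H0 H2.
  assert (HP := PI_RGT_0). assert (HP2 := PI2_3_2).
  destruct (SIN u H0 ltac:(lra)) as [Hs _].
  eapply Rle_trans; [|exact Hs].
  unfold sin_lb, sin_approx, sin_term. simpl. field_simplify.
  assert (Hv : 0 <= u*u <= 4) by nra.
  assert (A: 0 <= u * (2/3 - u*u/6)) by nra.
  assert (C: 0 <= u*(u*u)*(u*u)) by (apply Rmult_le_pos; [apply Rmult_le_pos|]; lra).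
  assert (B: 0 <= u*(u*u)*(u*u) * (1/120 - u*u/5040)) by (apply Rmult_le_pos; lra).
  replace (u^7) with (u*(u*u)*(u*u)*(u*u)) by ring.
  replace (u^5) with (u*(u*u)*(u*u)) by ring.
  replace (u^3) with (u*(u*u)) by ring.
  lra.
Qed.

Lemma sin_lb2 u : 0 <= u -> u <= PI/2 + 1/4 -> u/3 <= sin u.
Proof.
  intros H0 H1. assert (HP4 := PI_4).
  destruct (Rle_or_lt u 2) as [H|H].
  - apply sin_lb_poly; lra.
  - replace u with (PI/2 + (u - PI/2)) by ring.
    rewrite sin_plus, cos_PI2, sin_PI2.
    assert (HP := PI2_3_2).
    assert (Hc := Q_upper (u - PI/2)).
    assert (0 <= u - PI/2 <= 1/4) by lra.
    nra.
Qed.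

Lemma Q_lower w : Rabs w <= PI + 1/2 -> w^2/18 <= 1 - cos w.
Proof.
  intros H. rewrite Q_half.
  assert (G: forall v, 0 <= v <= PI + 1/2 -> v^2/18 <= 2 * sin (v/2)^2).
  { intros v Hv. assert (Hs := sin_lb2 (v/2) ltac:(lra) ltac:(lra)). nra. }
  destruct (Rle_or_lt 0 w).
  - rewrite Rabs_right in H by lra. apply G; lra.
  - rewrite Rabs_left in H by lra.
    replace (sin (w/2)^2) with (sin ((-w)/2) ^2)
      by (replace ((-w)/2) with (-(w/2)) by field; rewrite sin_neg; ring).
    replace (w^2) with ((-w)^2) by ring. apply G; lra.
Qed.

Lemma cos1_k w : cos w = 1 -> exists k:Z, w = IZR k * (2*PI).
Proof.
  intros H. assert (H2 : sin (w/2) = 0).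
  { assert (E := Q_half w). rewrite H in E. nra. }
  destruct (sin_eq_0_0 _ H2) as [k Hk]. exists k. lra.
Qed.

Lemma cos_perZ w k : cos (w + IZR k * (2*PI)) = cos w.
Proof.
  rewrite cos_plus.
  assert (Hs : sin (IZR k * PI) = 0) by (apply sin_eq_0_1; exists k; reflexivity).
  replace (IZR k * (2*PI)) with (2 * (IZR k * PI)) by ring.
  rewrite cos_2a_sin, sin_2a, Hs. ring.
Qed.

Lemma red01 x : exists k:Z, 0 <= x + IZR k*(2*PI) < 2*PI.
Proof.
  assert (HP := PI_RGT_0).
  destruct (archimed (x/(2*PI))) as [A B].
  exists (1 - up (x/(2*PI)))%Z. rewrite minus_IZR.
  set (u := IZR (up (x / (2*PI)))) in *.
  assert (E : x = (x/(2*PI)) * (2*PI)) by (field; lra).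
  split; nra.
Qed.

Lemma redpi x : exists k:Z, Rabs (x + IZR k*(2*PI)) <= PI.
Proof.
  destruct (red01 (x + PI)) as [k Hk]. exists k.
  apply Rabs_le. lra.
Qed.

Lemma Z_between k : -1 < IZR k < 1 -> k = 0%Z.
Proof.
  intros [A B]. apply lt_IZR in A. apply lt_IZR in B. lia.
Qed.

Lemma on_circle_expi a : on_circle (expi a).
Proof. unfold on_circle, expi; simpl. assert (H := sin2_cos2 a). unfold Rsqr in H. lra. Qed.

Lemma dist_expi a b : dist2 (expi a) (expi b) = sqrt (2*(1 - cos (a-b))).
Proof.
  unfold dist2, expi; simpl. f_equal. rewrite cos_minus.
  assert (H1 := sin2_cos2 a). assert (H2 := sin2_cos2 b). unfold Rsqr in *. nra.
Qed.

Lemma polar_dist r1 a t1 r2 b t2 :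
  dist3 (polar_pt r1 a t1) (polar_pt r2 b t2) =
  sqrt ((r1-r2)^2 + 2*r1*r2*(1-cos(a-b)) + (t1-t2)^2).
Proof.
  unfold dist3, polar_pt; simpl. f_equal. rewrite cos_minus.
  assert (H1 := sin2_cos2 a). assert (H2 := sin2_cos2 b). unfold Rsqr in *.
  replace ((r1 * cos a - r2 * cos b) * ((r1 * cos a - r2 * cos b) * 1) +
    (r1 * sin a - r2 * sin b) * ((r1 * sin a - r2 * sin b) * 1))
  with (r1*r1*(sin a * sin a + cos a * cos a) + r2*r2*(sin b * sin b + cos b * cos b)
        - 2*r1*r2*(cos a * cos b + sin a * sin b)) by ring.
  rewrite H1, H2. ring.
Qed.

Definition HQprop (lift : R -> R) (L : R) := forall a b,
  1 - cos (a-b) <= L^2 * (1 - cos (lift a - lift b)) /\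
  1 - cos (lift a - lift b) <= L^2 * (1 - cos (a-b)).

Lemma lift_period (lift : R -> R) L
  (Hinc : forall x y, x < y -> lift x < lift y)
  (Hcont : continuity lift) (HQ : HQprop lift L) :
  forall th, lift (th + 2*PI) = lift th + 2*PI.
Proof.
  intro th. assert (HP := PI_RGT_0).
  set (d := lift (th + 2*PI) - lift th).
  assert (Hd : cos d = 1).
  { destruct (HQ (th + 2*PI) th) as [_ H].
    replace (th + 2*PI - th) with (2*PI) in H by ring. rewrite cos_2PI in H.
    assert (Hn := Q_nonneg d). unfold d in *. nra. }
  destruct (cos1_k d Hd) as [k Hk].
  assert (Hdpos : 0 < d) by (unfold d; assert (lift th < lift (th + 2*PI)) by (apply Hinc; lra); lra).
  assert (Hk0 : (0 < k)%Z).
  { apply lt_IZR. nra. }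
  destruct (Z.eq_dec k 1) as [E|E].
  - subst k. unfold d in Hk. simpl in Hk. lra.
  - exfalso. assert (Hk2 : 2 <= IZR k) by (apply IZR_le; lia).
    destruct (IVT (fun s => lift s - (lift th + 2*PI)) th (th + 2*PI)) as [z [Hz Hz0]].
    + apply continuity_minus; [exact Hcont|]. apply continuity_const. intros ? ?; reflexivity.
    + lra.
    + lra.
    + unfold d in Hk. nra.
    + assert (Hcz : cos (z - th) = 1).
      { destruct (HQ z th) as [H _].
        replace (lift z - lift th) with (2*PI) in H by lra. rewrite cos_2PI in H.
        assert (Hn := Q_nonneg (z - th)). nra. }
      destruct (cos1_k _ Hcz) as [j Hj].
      assert (0 <= IZR j <= 1) by (split; nra).
      destruct H as [H1 H2]. apply le_IZR in H1. apply le_IZR in H2.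
      assert (j = 0%Z \/ j = 1%Z) as [-> | ->] by lia; simpl in Hj.
      * assert (z = th) by lra. subst z. lra.
      * assert (z = th + 2*PI) by lra. subst z. unfold d in Hk. nra.
Qed.

Lemma lift_periodN lift
  (Hp : forall th, lift (th + 2*PI) = lift th + 2*PI) :
  forall n th, lift (th + INR n * (2*PI)) = lift th + INR n * (2*PI).
Proof.
  induction n; intro th.
  - simpl. rewrite !Rmult_0_l, !Rplus_0_r. reflexivity.
  - rewrite S_INR. replace (th + (INR n + 1) * (2*PI)) with ((th + INR n * (2*PI)) + 2*PI) by ring.
    rewrite Hp, IHn. ring.
Qed.

Lemma lift_periodZ lift
  (Hp : forall th, lift (th + 2*PI) = lift th + 2*PI) :
  forall (k : Z) th, lift (th + IZR k * (2*PI)) = lift th + IZR k * (2*PI).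
Proof.
  intros k th. destruct (Z.le_gt_cases 0 k) as [H|H].
  - rewrite <- (Z2Nat.id k H). rewrite <- INR_IZR_INZ. apply lift_periodN; assumption.
  - replace k with (- Z.of_nat (Z.to_nat (-k)))%Z by lia.
    rewrite opp_IZR, <- INR_IZR_INZ. set (n := Z.to_nat (-k)).
    assert (E := lift_periodN lift Hp n (th - INR n * (2*PI))).
    replace (th - INR n * (2 * PI) + INR n * (2 * PI)) with th in E by ring.
    replace (th + - INR n * (2*PI)) with (th - INR n * (2*PI)) by ring. lra.
Qed.

Lemma lift_fix lift L
  (Hinc : forall x y, x < y -> lift x < lift y)
  (Hcont : continuity lift) (HQ : HQprop lift L) (H0 : lift 0 = 0) c :
  0 < c < 2*PI -> cos (lift c) = cos c -> sin (lift c) = sin c -> lift c = c.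
Proof.
  intros Hc Ec Es.
  assert (Hp := lift_period lift L Hinc Hcont HQ).
  assert (H2 : lift (2*PI) = 2*PI).
  { assert (E := Hp 0). rewrite Rplus_0_l, H0 in E. lra. }
  assert (A : lift 0 < lift c) by (apply Hinc; lra).
  assert (B : lift c < lift (2*PI)) by (apply Hinc; lra).
  assert (Hcc : cos (lift c - c) = 1).
  { rewrite cos_minus, Ec, Es. assert (W := sin2_cos2 c). unfold Rsqr in W. lra. }
  destruct (cos1_k _ Hcc) as [k Hk].
  assert (HP := PI_RGT_0).
  assert (k = 0%Z). { apply Z_between. split; nra. }
  subst k. simpl in Hk. lra.
Qed.

Lemma Rabs_le_between x a : Rabs x <= a -> -a <= x <= a.
Proof. unfold Rabs; destruct Rcase_abs; intros; lra. Qed.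

Lemma lift_h lift L
  (Hinc : forall x y, x < y -> lift x < lift y)
  (Hcont : continuity lift) (HQ : HQprop lift L) (H0 : lift 0 = 0)
  (Hq1 : lift (PI/2) = PI/2) (Hq2 : lift PI = PI) (Hq3 : lift (3*(PI/2)) = 3*(PI/2)) :
  forall th, Rabs (lift th - th) <= PI/2.
Proof.
  assert (Hp := lift_period lift L Hinc Hcont HQ).
  assert (HpZ := lift_periodZ lift Hp).
  assert (H2 : lift (2*PI) = 2*PI).
  { assert (E := Hp 0). rewrite Rplus_0_l, H0 in E. lra. }
  assert (Hle : forall x y, x <= y -> lift x <= lift y).
  { intros x y [H|H]; [left; apply Hinc; exact H| subst; lra]. }
  intro th. destruct (red01 th) as [k Hk].
  set (t := th + IZR k * (2*PI)) in *.
  assert (E : lift th - th = lift t - t) by (unfold t; rewrite HpZ; ring).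
  rewrite E. apply Rabs_le. assert (HP := PI_RGT_0).
  destruct (Rle_or_lt t (PI/2)).
  { assert (A := Hle 0 t ltac:(lra)). assert (B := Hle t (PI/2) ltac:(lra)). lra. }
  destruct (Rle_or_lt t PI).
  { assert (A := Hle (PI/2) t ltac:(lra)). assert (B := Hle t PI ltac:(lra)). lra. }
  destruct (Rle_or_lt t (3*(PI/2))).
  { assert (A := Hle PI t ltac:(lra)). assert (B := Hle t (3*(PI/2)) ltac:(lra)). lra. }
  { assert (A := Hle (3*(PI/2)) t ltac:(lra)). assert (B := Hle t (2*PI) ltac:(lra)). lra. }
Qed.

Lemma lift_local lift L (HL : 0 < L)
  (Hinc : forall x y, x < y -> lift x < lift y)
  (HQ : HQprop lift L) (Hh : forall th, Rabs (lift th - th) <= PI/2) :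
  forall a b, b <= a -> a - b <= 1/2 ->
    lift a - lift b <= 3*L*(a-b) /\ a - b <= 3*L*(lift a - lift b).
Proof.
  intros a b Hab Hx.
  assert (Hy0 : 0 <= lift a - lift b).
  { destruct Hab as [H|H]; [assert (lift b < lift a) by (apply Hinc; lra); lra | subst; lra]. }
  assert (Ha := Hh a). assert (Hb := Hh b). apply Rabs_le_between in Ha. apply Rabs_le_between in Hb.
  assert (Hy1 : lift a - lift b <= (a - b) + PI) by lra.
  assert (HP := PI_RGT_0).
  assert (Ly := Q_lower (lift a - lift b) ltac:(apply Rabs_le; lra)).
  assert (Uy := Q_upper (lift a - lift b)).
  assert (Lx := Q_lower (a - b) ltac:(apply Rabs_le; lra)).
  assert (Ux := Q_upper (a - b)).
  destruct (HQ a b) as [Q1 Q2].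
  set (x := a - b) in *. set (y := lift a - lift b) in *.
  set (qx := 1 - cos x) in *. set (qy := 1 - cos y) in *.
  assert (HL2 : 0 <= L^2) by nra.
  assert (S1 : y^2 <= 9 * L^2 * x^2).
  { assert (L^2 * qx <= L^2 * (x^2/2)) by (apply Rmult_le_compat_l; lra). lra. }
  assert (S2 : x^2 <= 9 * L^2 * y^2).
  { assert (L^2 * qy <= L^2 * (y^2/2)) by (apply Rmult_le_compat_l; lra). lra. }
  assert (Hx0 : 0 <= x) by (unfold x; lra).
  split.
  - destruct (Rle_or_lt y (3*L*x)) as [G|G]; [exact G|].
    assert (0 <= 3*L*x) by nra. nra.
  - destruct (Rle_or_lt x (3*L*y)) as [G|G]; [exact G|].
    assert (0 <= 3*L*y) by nra. nra.
Qed.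

Lemma lift_bilip lift L (HL : 0 < L)
  (Hinc : forall x y, x < y -> lift x < lift y)
  (HQ : HQprop lift L) (Hh : forall th, Rabs (lift th - th) <= PI/2) :
  forall a b, b <= a ->
    (1/(48*L+2))*(a-b) <= lift a - lift b <= (3*L+9)*(a-b).
Proof.
  intros a b Hab.
  assert (Hle : forall x y, x <= y -> lift x <= lift y).
  { intros x y [H|H]; [left; apply Hinc; exact H| subst; lra]. }
  assert (HP := PI_RGT_0). assert (HP4 := PI_4).
  assert (Hm : 0 < 1/(48*L+2)) by (apply Rdiv_lt_0_compat; lra).
  assert (Ha := Hh a). assert (Hb := Hh b). apply Rabs_le_between in Ha. apply Rabs_le_between in Hb.
  destruct (Rle_or_lt (a-b) (1/2)) as [Hx|Hx].
  - destruct (lift_local lift L HL Hinc HQ Hh a b Hab Hx) as [U V].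
    split; [|nra].
    assert (1/(48*L+2) * (3*L) <= 1) by (apply Rmult_le_reg_l with (48*L+2); [lra|]; field_simplify; lra).
    nra.
  - split; [|nra].
    destruct (lift_local lift L HL Hinc HQ Hh (b + 1/2) b ltac:(lra) ltac:(lra)) as [_ V].
    assert (W := Hle (b+1/2) a ltac:(lra)).
    destruct (Rle_or_lt (a-b) 8).
    + assert (1/(48*L+2) * (48*L) <= 1) by (apply Rmult_le_reg_l with (48*L+2); [lra|]; field_simplify; lra).
      nra.
    + assert (1/(48*L+2) <= 1/2) by (apply Rmult_le_reg_l with (2*(48*L+2)); [lra|]; field_simplify; lra).
      nra.
Qed.

Lemma sq_of_abs a b c : 0 <= c -> Rabs a <= c * Rabs b -> a^2 <= c^2 * b^2.
Proof.
  intros Hc H. rewrite <- (pow2_abs a), <- (pow2_abs b).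
  assert (0 <= Rabs a) by apply Rabs_pos. assert (0 <= Rabs b) by apply Rabs_pos. nra.
Qed.

Lemma sqrt_sq_le x y L : 0 <= x -> 0 <= y -> 0 <= L -> sqrt x <= L * sqrt y -> x <= L^2 * y.
Proof.
  intros Hx Hy HL H. assert (E1 := sqrt_sqrt x Hx). assert (E2 := sqrt_sqrt y Hy).
  assert (0 <= sqrt x) by apply sqrt_pos. assert (0 <= sqrt y) by apply sqrt_pos. nra.
Qed.

Lemma sq_sqrt_le x y K : 0 <= x -> 0 <= y -> 0 <= K -> x <= K^2 * y -> sqrt x <= K * sqrt y.
Proof.
  intros Hx Hy HK H. assert (E1 := sqrt_sqrt x Hx). assert (E2 := sqrt_sqrt y Hy).
  assert (0 <= sqrt x) by apply sqrt_pos. assert (0 <= sqrt y) by apply sqrt_pos.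
  destruct (Rle_or_lt (sqrt x) (K * sqrt y)) as [G|G]; [exact G|].
  assert (Hsq : K*sqrt y * (K*sqrt y) < sqrt x * sqrt x) by (assert (0 <= K*sqrt y) by (apply Rmult_le_pos; lra); apply Rmult_le_0_lt_compat; lra).
  exfalso. replace (K*sqrt y * (K*sqrt y)) with (K^2 * (sqrt y * sqrt y)) in Hsq by ring. rewrite E1, E2 in Hsq. lra.
Qed.

Lemma phit_per lift (HpZ : forall (k:Z) th, lift (th + IZR k * (2*PI)) = lift th + IZR k * (2*PI)) t th k :
  phi_t lift t (th + IZR k * (2*PI)) = phi_t lift t th + IZR k * (2*PI).
Proof. unfold phi_t. rewrite HpZ. ring. Qed.

Lemma phit_diff lift (Hh : forall th, Rabs (lift th - th) <= PI/2) t1 t2 th :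
  Rabs (phi_t lift t1 th - phi_t lift t2 th) <= 2 * Rabs (t1 - t2).
Proof.
  unfold phi_t. replace ((1 - t1) * th + t1 * lift th - ((1 - t2) * th + t2 * lift th))
    with ((t1 - t2) * (lift th - th)) by ring.
  rewrite Rabs_mult. assert (H := Hh th). assert (HP := PI_4).
  assert (0 <= Rabs (t1 - t2)) by apply Rabs_pos. nra.
Qed.

Lemma phit_lip lift m M (Hm : 0 < m) (Hm1 : m <= 1) (HM : 1 <= M)
  (Hb : forall a b, b <= a -> m*(a-b) <= lift a - lift b <= M*(a-b)) t :
  0 <= t <= 1 -> forall a b,
  Rabs (phi_t lift t a - phi_t lift t b) <= M * Rabs (a - b) /\
  m * Rabs (a-b) <= Rabs (phi_t lift t a - phi_t lift t b).
Proof.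
  intros Ht.
  assert (G : forall a b, b <= a -> m*(a-b) <= phi_t lift t a - phi_t lift t b <= M*(a-b)).
  { intros a b Hab. destruct (Hb a b Hab) as [B1 B2]. unfold phi_t.
    assert (X1 : 0 <= (1-m)*(a-b)) by (apply Rmult_le_pos; lra).
    assert (X2 : 0 <= (M-1)*(a-b)) by (apply Rmult_le_pos; lra).
    assert (X3 : 0 <= (1-t)*((1-m)*(a-b))) by (apply Rmult_le_pos; lra).
    assert (X4 : 0 <= t*(lift a - lift b - m*(a-b))) by (apply Rmult_le_pos; lra).
    assert (X5 : 0 <= (1-t)*((M-1)*(a-b))) by (apply Rmult_le_pos; lra).
    assert (X6 : 0 <= t*(M*(a-b) - (lift a - lift b))) by (apply Rmult_le_pos; lra).
    split; nra. }
  intros a b. destruct (Rle_or_lt b a) as [H|H].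
  - destruct (G a b H). rewrite !Rabs_right by nra. lra.
  - destruct (G b a ltac:(lra)).
    rewrite (Rabs_left (a - b)) by lra.
    rewrite Rabs_left by nra. lra.
Qed.

Lemma Rabs_sub_le a b : Rabs (a - b) <= Rabs a + Rabs b.
Proof. unfold Rabs; repeat destruct Rcase_abs; lra. Qed.

Lemma key_fwd (f : R -> R -> R) M (HM : 0 <= M)
  (Hper : forall t th k, f t (th + IZR k*(2*PI)) = f t th + IZR k*(2*PI))
  (Hlip : forall t, 0 <= t <= 1 -> forall a b, Rabs (f t a - f t b) <= M * Rabs (a-b))
  (Hdiff : forall t1 t2 th, Rabs (f t1 th - f t2 th) <= 2 * Rabs (t1-t2))
  th1 th2 t1 t2 (Ht1 : 0 <= t1 <= 1) :
  1 - cos (f t1 th1 - f t2 th2) <= 18*M^2*(1 - cos (th1-th2)) + 4*(t1-t2)^2.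
Proof.
  destruct (redpi (th1 - th2)) as [k Hk].
  set (th1' := th1 + IZR k * (2*PI)).
  assert (E1 : cos (th1 - th2) = cos (th1' - th2)).
  { unfold th1'. replace (th1 + IZR k * (2*PI) - th2) with ((th1 - th2) + IZR k * (2*PI)) by ring.
    rewrite cos_perZ. reflexivity. }
  assert (E2 : cos (f t1 th1 - f t2 th2) = cos (f t1 th1' - f t2 th2)).
  { unfold th1'. rewrite Hper.
    replace (f t1 th1 + IZR k * (2*PI) - f t2 th2) with ((f t1 th1 - f t2 th2) + IZR k * (2*PI)) by ring.
    rewrite cos_perZ. reflexivity. }
  rewrite E1, E2.
  assert (Hx : Rabs (th1' - th2) <= PI) by (unfold th1'; replace (th1 + IZR k * (2*PI) - th2) with (th1 - th2 + IZR k * (2*PI)) by ring; exact Hk).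
  assert (hA := sq_of_abs _ _ _ HM (Hlip t1 Ht1 th1' th2)).
  assert (hB := sq_of_abs _ _ 2 ltac:(lra) (Hdiff t1 t2 th2)).
  assert (Lx := Q_lower (th1' - th2) ltac:(lra)).
  assert (Uz := Q_upper (f t1 th1' - f t2 th2)).
  set (A := f t1 th1' - f t1 th2) in *. set (B := f t1 th2 - f t2 th2) in *.
  replace (f t1 th1' - f t2 th2) with (A + B) in * by (unfold A, B; ring).
  set (x := th1' - th2) in *.
  assert (M^2 * x^2 <= M^2 * (18 * (1 - cos x))) by (apply Rmult_le_compat_l; nra).
  assert (0 <= (A - B)^2) by apply pow2_ge_0.
  nra.
Qed.

Lemma key_bwd (f : R -> R -> R) m (Hm : 0 < m)
  (Hper : forall t th k, f t (th + IZR k*(2*PI)) = f t th + IZR k*(2*PI))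
  (Hlip : forall t, 0 <= t <= 1 -> forall a b, m * Rabs (a-b) <= Rabs (f t a - f t b))
  (Hdiff : forall t1 t2 th, Rabs (f t1 th - f t2 th) <= 2 * Rabs (t1-t2))
  th1 th2 t1 t2 (Ht1 : 0 <= t1 <= 1) :
  m^2 * (1 - cos (th1-th2)) <= 18*(1 - cos (f t1 th1 - f t2 th2)) + 4*(t1-t2)^2.
Proof.
  destruct (redpi (f t1 th1 - f t2 th2)) as [k Hk].
  set (th1' := th1 + IZR k * (2*PI)).
  assert (E1 : cos (th1 - th2) = cos (th1' - th2)).
  { unfold th1'. replace (th1 + IZR k * (2*PI) - th2) with ((th1 - th2) + IZR k * (2*PI)) by ring.
    rewrite cos_perZ. reflexivity. }
  assert (E3 : f t1 th1' - f t2 th2 = f t1 th1 - f t2 th2 + IZR k * (2*PI)).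
  { unfold th1'. rewrite Hper. ring. }
  assert (E2 : cos (f t1 th1 - f t2 th2) = cos (f t1 th1' - f t2 th2)).
  { rewrite E3, cos_perZ. reflexivity. }
  rewrite E1, E2. rewrite <- E3 in Hk.
  assert (hA := Hlip t1 Ht1 th1' th2).
  assert (hB := Hdiff t1 t2 th2).
  assert (Lz := Q_lower (f t1 th1' - f t2 th2) ltac:(lra)).
  assert (Ux := Q_upper (th1' - th2)).
  set (z := f t1 th1' - f t2 th2) in *.
  assert (EA : f t1 th1' - f t1 th2 = z - (f t1 th2 - f t2 th2)) by (unfold z; ring).
  rewrite EA in hA.
  assert (T := Rabs_sub_le z (f t1 th2 - f t2 th2)).
  set (x := th1' - th2) in *.
  set (s := t1 - t2) in *.
  assert (Hax : 0 <= Rabs x) by apply Rabs_pos.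
  assert (Haz : 0 <= Rabs z) by apply Rabs_pos.
  assert (Has : 0 <= Rabs s) by apply Rabs_pos.
  assert (W : m * Rabs x <= Rabs z + 2 * Rabs s) by lra.
  assert (W2 : (m * Rabs x)^2 <= (Rabs z + 2 * Rabs s)^2) by (apply pow_incr; nra).
  rewrite Rpow_mult_distr, !pow2_abs in W2.
  assert (W3 : (Rabs z + 2*Rabs s)^2 <= 2 * z^2 + 8 * s^2).
  { rewrite <- (pow2_abs z), <- (pow2_abs s). assert (0 <= (Rabs z - 2*Rabs s)^2) by apply pow2_ge_0. nra. }
  assert (m^2 * (1 - cos x) <= m^2 * (x^2/2)) by (apply Rmult_le_compat_l; nra).
  nra.
Qed.

Theorem lemma4p3
  (phi : R * R -> R * R) (lift : R -> R)
  (Hmaps : forall p, on_circle p -> on_circle (phi p))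
  (Honto : forall q, on_circle q -> exists p, on_circle p /\ phi p = q)
  (Hbilip : exists L, 0 < L /\
     forall p q, on_circle p -> on_circle q ->
       dist2 p q <= L * dist2 (phi p) (phi q) /\
       dist2 (phi p) (phi q) <= L * dist2 p q)
  (H1 : phi (1, 0) = (1, 0)) (Hi : phi (0, 1) = (0, 1))
  (Hm1 : phi (-1, 0) = (-1, 0)) (Hmi : phi (0, -1) = (0, -1))
  (Hlift_incr : forall x y, x < y -> lift x < lift y)
  (Hlift_cont : continuity lift)
  (Hlift0 : lift 0 = 0)
  (Hlift : forall th, phi (expi th) = expi (lift th)) :
  exists K, 0 < K /\
    forall r1 th1 t1 r2 th2 t2,
      0 <= r1 <= 1 -> 0 <= t1 <= 1 -> 0 <= r2 <= 1 -> 0 <= t2 <= 1 ->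
      dist3 (polar_pt r1 th1 t1) (polar_pt r2 th2 t2)
        <= K * dist3 (phibar_pt lift r1 th1 t1) (phibar_pt lift r2 th2 t2) /\
      dist3 (phibar_pt lift r1 th1 t1) (phibar_pt lift r2 th2 t2)
        <= K * dist3 (polar_pt r1 th1 t1) (polar_pt r2 th2 t2).
Proof.
  destruct Hbilip as [L [HL Hb]].
  assert (HQ : HQprop lift L).
  { intros a b. destruct (Hb (expi a) (expi b) (on_circle_expi a) (on_circle_expi b)) as [B1 B2].
    rewrite !Hlift, !dist_expi in B1, B2.
    assert (Na := Q_nonneg (a-b)). assert (Nb := Q_nonneg (lift a - lift b)).
    apply sqrt_sq_le in B1; [|lra|lra|lra]. apply sqrt_sq_le in B2; [|lra|lra|lra].
    split; lra. }
  assert (Hp := lift_period lift L Hlift_incr Hlift_cont HQ).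
  assert (HP := PI_RGT_0).
  assert (q1 : lift (PI/2) = PI/2).
  { assert (E := Hlift (PI/2)). unfold expi in E. rewrite cos_PI2, sin_PI2, Hi in E.
    injection E as Ec Es.
    apply (lift_fix lift L Hlift_incr Hlift_cont HQ Hlift0); [lra| rewrite cos_PI2; auto | rewrite sin_PI2; auto]. }
  assert (q2 : lift PI = PI).
  { assert (E := Hlift PI). unfold expi in E. rewrite cos_PI, sin_PI, Hm1 in E.
    injection E as Ec Es.
    apply (lift_fix lift L Hlift_incr Hlift_cont HQ Hlift0); [lra| rewrite cos_PI; auto | rewrite sin_PI; auto]. }
  assert (q3 : lift (3*(PI/2)) = 3*(PI/2)).
  { assert (E := Hlift (3*(PI/2))). unfold expi in E. rewrite cos_3PI2, sin_3PI2, Hmi in E.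
    injection E as Ec Es.
    apply (lift_fix lift L Hlift_incr Hlift_cont HQ Hlift0); [lra| rewrite cos_3PI2; auto | rewrite sin_3PI2; auto]. }
  assert (Hh := lift_h lift L Hlift_incr Hlift_cont HQ Hlift0 q1 q2 q3).
  assert (Hbl := lift_bilip lift L HL Hlift_incr HQ Hh).
  set (m := 1/(48*L+2)) in *. set (M := 3*L+9) in *.
  assert (Hm : 0 < m) by (unfold m; apply Rdiv_lt_0_compat; lra).
  assert (Hm1' : m <= 1) by (unfold m; apply Rmult_le_reg_l with (48*L+2); [lra|]; field_simplify; lra).
  assert (HM : 1 <= M) by (unfold M; lra).
  assert (HpZ := lift_periodZ lift Hp).
  assert (Hper := phit_per lift HpZ).
  assert (Hdiff := phit_diff lift Hh).
  assert (Hlip := phit_lip lift m M Hm Hm1' HM Hbl).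
  assert (F := key_fwd (phi_t lift) M ltac:(lra) Hper
                 (fun t Ht a b => proj1 (Hlip t Ht a b)) Hdiff).
  assert (B := key_bwd (phi_t lift) m Hm Hper
                 (fun t Ht a b => proj2 (Hlip t Ht a b)) Hdiff).
  set (K := 18*M^2 + 9 + 18/m^2).
  assert (Hm2 : 0 < m^2) by nra.
  assert (HK18 : 0 <= 18/m^2) by (unfold Rdiv; apply Rmult_le_pos; [lra| left; apply Rinv_0_lt_compat; lra]).
  assert (HK1 : 1 <= K) by (unfold K; nra).
  exists K. split; [lra|].
  intros r1 th1 t1 r2 th2 t2 Hr1 Ht1 Hr2 Ht2.
  unfold phibar_pt. rewrite !polar_dist.
  specialize (F th1 th2 t1 t2 Ht1). specialize (B th1 th2 t1 t2 Ht1).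
  set (qx := 1 - cos (th1 - th2)) in *.
  set (qz := 1 - cos (phi_t lift t1 th1 - phi_t lift t2 th2)) in *.
  set (s := t1 - t2) in *.
  assert (Nx : 0 <= qx) by apply Q_nonneg. assert (Nz : 0 <= qz) by apply Q_nonneg.
  assert (Hrr : 0 <= r1*r2 <= 1) by (split; nra).
  assert (Hs2 : 0 <= s^2) by apply pow2_ge_0.
  assert (Hd2 : 0 <= (r1-r2)^2) by apply pow2_ge_0.
  set (D0 := (r1 - r2)^2 + 2*r1*r2*qx + s^2).
  set (D1 := (r1 - r2)^2 + 2*r1*r2*qz + s^2).
  assert (N0 : 0 <= D0) by (unfold D0; assert (0 <= r1*r2*qx) by (apply Rmult_le_pos; lra); lra).
  assert (N1 : 0 <= D1) by (unfold D1; assert (0 <= r1*r2*qz) by (apply Rmult_le_pos; lra); lra).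
  assert (KK : forall D, 0 <= D -> K * D <= K^2 * D).
  { intros D HD. assert (0 <= (K - 1) * D) by (apply Rmult_le_pos; lra). replace (K^2*D) with (K*D + K*((K-1)*D)) by ring. assert (0 <= K*((K-1)*D)) by (apply Rmult_le_pos; lra). lra. }
  split; apply sq_sqrt_le; try lra.
  -
    assert (G : m^2 * D0 <= 18 * D1).
    { unfold D0, D1.
      assert (r1*r2*(m^2*qx) <= r1*r2*(18*qz + 4*s^2)) by (apply Rmult_le_compat_l; lra).
      assert (r1*r2*s^2 <= 1 * s^2) by (apply Rmult_le_compat_r; lra).
      assert (Hmm : 0 <= 1 - m^2) by nra.
      assert (0 <= (1 - m^2)*(r1-r2)^2) by (apply Rmult_le_pos; lra).
      assert (0 <= (1 - m^2)*s^2) by (apply Rmult_le_pos; lra).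
      assert (r1*r2*qz <= 1 * qz) by (apply Rmult_le_compat_r; lra).
      nra. }
    assert (G2 : D0 <= 18/m^2 * D1).
    { apply Rmult_le_reg_l with (m^2); [lra|]. field_simplify; [|lra]. lra. }
    assert (18/m^2 * D1 <= K * D1) by (apply Rmult_le_compat_r; [lra| unfold K; nra]).
    specialize (KK D1 N1). lra.
  - assert (G : D1 <= (18*M^2 + 9) * D0).
    { unfold D0, D1.
      assert (r1*r2*qz <= r1*r2*(18*M^2*qx + 4*s^2)) by (apply Rmult_le_compat_l; lra).
      assert (r1*r2*s^2 <= 1 * s^2) by (apply Rmult_le_compat_r; lra).
      assert (0 <= M^2*(r1-r2)^2) by nra.
      assert (0 <= M^2*s^2) by nra.
      nra. }
    assert ((18*M^2 + 9) * D0 <= K * D0) by (apply Rmult_le_compat_r; [lra| unfold K; lra]).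
    specialize (KK D0 N0). lra.
Qed.
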